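(* Let $\mathfrak n$ be a seven-dimensional two-step nilpotent real Lie algebra with an invariant scalar product $\langle\cdot,\cdot\rangle$ of index three. Then $\mathrm{ad}(\mathfrak n)$ is not contained in $\mathfrak g_{2(2)}$, where $\mathfrak g_{2(2)}$ is regarded as a subalgebra of $\mathfrak{so}(\mathfrak n,\langle\cdot,\cdot\rangle)\cong\mathfrak{so}_{4,3}$ (i.e. there is no three-form on $\mathfrak n$ of $\mathrm G_{2(2)}$-type compatible with $\langle\cdot,\cdot\rangle$ that is annihilated by $\mathrm{ad}(x)$ for all $x\in\mathfrak n$).
   Context: An invariant scalar product is a nondegenerate symmetric bilinear form satisfying $\langle[x,y],z\rangle=\langle x,[y,z]\rangle$; index three on a seven-dimensional space means signature $(4,3)$ or $(3,4)$. $\mathfrak{so}(\mathfrak n,\langle\cdot,\cdot\rangle)$ is the Lie algebra of endomorphisms skew-symmetric for $\langle\cdot,\cdot\rangle$. $\mathfrak g_{2(2)}$ is the Lie algebra of the split real form $\mathrm G_{2(2)}$ of $\mathrm G_2^{\mathbb C}$, which is the stabilizer subalgebra in $\mathfrak{so}_{4,3}$ of a certain (generic, split-type) three-form. A Lie algebra is two-step nilpotent if $[\mathfrak n,[\mathfrak n,\mathfrak n]]=0$ but $[\mathfrak n,\mathfrak n]\neq 0$. *)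

(* Defs.v *)
From HB Require Import structures.
From mathcomp Require Import all_boot all_order all_algebra.
Set Implicit Arguments. Unset Strict Implicit. Unset Printing Implicit Defensive.
Import Order.TTheory GRing.Theory Num.Theory.
Local Open Scope ring_scope.

(* A seven-dimensional real Lie algebra is modelled on coordinate space
   'rV[R]_7 (the theorem takes R : realType, i.e. the real numbers) with
   bracket given by structure constants c i j k : [e_i, e_j] = sum_k c i j k e_k. *)

Section Defs.
Variable R : realFieldType.

Definition vec := 'rV[R]_7.

Definition br (c : 'I_7 -> 'I_7 -> 'I_7 -> R) (x y : vec) : vec :=
  \row_k \sum_i \sum_j x 0 i * y 0 j * c i j k.

Definition is_lie_algebra (c : 'I_7 -> 'I_7 -> 'I_7 -> R) : Prop :=
  (forall x : vec, br c x x = 0) /\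
  (forall x y z : vec,
      br c x (br c y z) + br c y (br c z x) + br c z (br c x y) = 0).

Definition two_step_nilpotent (c : 'I_7 -> 'I_7 -> 'I_7 -> R) : Prop :=
  (forall x y z : vec, br c x (br c y z) = 0) /\
  (exists x y : vec, br c x y != 0).

Definition bform (S : 'M[R]_7) (x y : vec) : R := (x *m S *m y^T) 0 0.

Definition eta : 'M[R]_7 :=
  diag_mx (\row_(i < 7) if (i < 3)%N then 1 else -1).

Definition scalar_product (S : 'M[R]_7) : Prop :=
  S^T = S /\ \det S != 0.

(* index three on a 7-dimensional space: signature (3,4) or (4,3),
   i.e. S is congruent to eta = diag(1,1,1,-1,-1,-1,-1) or to -eta *)
Definition index_three (S : 'M[R]_7) : Prop :=
  exists P : 'M[R]_7, P \in unitmx /\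
    (P *m S *m P^T = eta \/ P *m S *m P^T = - eta).

Definition invariant_form (c : 'I_7 -> 'I_7 -> 'I_7 -> R) (S : 'M[R]_7) : Prop :=
  forall x y z : vec, bform S (br c x y) z = bform S x (br c y z).

Definition tri (T : 'I_7 -> 'I_7 -> 'I_7 -> R) (x y z : vec) : R :=
  \sum_i \sum_j \sum_k T i j k * x 0 i * y 0 j * z 0 k.

Definition alternating (T : 'I_7 -> 'I_7 -> 'I_7 -> R) : Prop :=
  forall i j k, T i j k = - T j i k /\ T i j k = - T i k j.

Definition e3 (a b c : nat) (x y z : vec) : R :=
  let X n := x 0 (inord n) in let Y n := y 0 (inord n) in
  let Z n := z 0 (inord n) in
  X a * (Y b * Z c - Y c * Z b) - X b * (Y a * Z c - Y c * Z a)
  + X c * (Y a * Z b - Y b * Z a).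

(* the standard split G_2 three-form (0-indexed):
   e123 - e145 - e167 - e246 + e257 + e347 + e356 (1-indexed), whose
   stabilizer in gl_7 is g_{2(2)}, contained in so(eta) *)
Definition phi0 (x y z : vec) : R :=
  e3 0 1 2 x y z - e3 0 3 4 x y z - e3 0 5 6 x y z - e3 1 3 5 x y z
  + e3 1 4 6 x y z + e3 2 3 6 x y z + e3 2 4 5 x y z.

(* T is a three-form of G_{2(2)}-type compatible with S: in some basis
   (the rows of P) it is the standard split form phi0, and in that basis
   S is a nonzero multiple of the metric eta induced by phi0 *)
Definition G22_compatible (T : 'I_7 -> 'I_7 -> 'I_7 -> R) (S : 'M[R]_7) : Prop :=
  alternating T /\
  exists P : 'M[R]_7, exists l : R, P \in unitmx /\ l != 0 /\
    (forall x y z : vec, tri T (x *m P) (y *m P) (z *m P) = phi0 x y z) /\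
    P *m S *m P^T = l *: eta.

Definition ad_invariant (c : 'I_7 -> 'I_7 -> 'I_7 -> R)
    (T : 'I_7 -> 'I_7 -> 'I_7 -> R) : Prop :=
  forall x y z w : vec,
    tri T (br c x y) z w + tri T y (br c x z) w + tri T y z (br c x w) = 0.

End Defs.

(* Main.v *)
Require Import Defs.
From HB Require Import structures.
From mathcomp Require Import all_boot all_order all_algebra.
From mathcomp Require Import reals.
From mathcomp Require Import ring lra zify.
Set Implicit Arguments. Unset Strict Implicit. Unset Printing Implicit Defensive.
Import Order.TTheory GRing.Theory Num.Theory.
Local Open Scope ring_scope.

Section Pf.
Variable R : realFieldType.
Variable c : 'I_7 -> 'I_7 -> 'I_7 -> R.
Variables (S P : 'M[R]_7) (l : R) (T : 'I_7 -> 'I_7 -> 'I_7 -> R).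
Hypothesis Hxx : forall x : vec R, br c x x = 0.
Hypothesis HS : S^T = S.
Hypothesis Hinv : invariant_form c S.
Hypothesis HP : P \in unitmx.
Hypothesis Hl : l != 0.
Hypothesis HT : forall x y z : vec R, tri T (x *m P) (y *m P) (z *m P) = phi0 x y z.
Hypothesis HPS : P *m S *m P^T = l *: @Defs.eta R.
Hypothesis Had : ad_invariant c T.

Lemma brDl (x y z : vec R) : br c (x + y) z = br c x z + br c y z.
Proof.
apply/rowP=> k; rewrite !mxE -big_split; apply: eq_bigr => i _.
rewrite -big_split; apply: eq_bigr => j _; rewrite !mxE /=; ring.
Qed.
Lemma brDr (x y z : vec R) : br c z (x + y) = br c z x + br c z y.
Proof.
apply/rowP=> k; rewrite !mxE -big_split; apply: eq_bigr => i _.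
rewrite -big_split; apply: eq_bigr => j _; rewrite !mxE /=; ring.
Qed.
Lemma brZl a (x z : vec R) : br c (a *: x) z = a *: br c x z.
Proof.
apply/rowP=> k; rewrite !mxE mulr_sumr; apply: eq_bigr => i _.
rewrite mulr_sumr; apply: eq_bigr => j _; rewrite !mxE /=; ring.
Qed.
Lemma brZr a (x z : vec R) : br c z (a *: x) = a *: br c z x.
Proof.
apply/rowP=> k; rewrite !mxE mulr_sumr; apply: eq_bigr => i _.
rewrite mulr_sumr; apply: eq_bigr => j _; rewrite !mxE /=; ring.
Qed.
Lemma br0l (z : vec R) : br c 0 z = 0.
Proof. by rewrite -(scale0r (0 : vec R)) brZl !scale0r. Qed.
Lemma br0r (z : vec R) : br c z 0 = 0.
Proof. by rewrite -(scale0r (0 : vec R)) brZr !scale0r. Qed.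
Lemma br_anti (x y : vec R) : br c x y = - br c y x.
Proof.
have h := Hxx (x + y); rewrite brDl !brDr !Hxx add0r addr0 in h.
by apply/eqP; rewrite -addr_eq0 h.
Qed.

Definition Pi := invmx P.
Definition b (x y : vec R) : vec R := br c (x *m P) (y *m P) *m Pi.
Definition e (n : nat) : vec R := delta_mx 0 (inord n).
Definition etav (k : nat) : R := if (k < 3)%N then 1 else -1.
Definition Fv (i j k : nat) : R := etav k * b (e i) (e j) 0 (inord k).
Definition G (x y z : vec R) := bform S (br c (x *m P) (y *m P)) (z *m P).

Lemma brP x y : br c (x *m P) (y *m P) = b x y *m P.
Proof. by rewrite /b /Pi mulmxKV. Qed.

Lemma AD x y z w : phi0 (b x y) z w + phi0 y (b x z) w + phi0 y z (b x w) = 0.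
Proof.
have := Had (x *m P) (y *m P) (z *m P) (w *m P).
by rewrite !brP !HT.
Qed.

Lemma bform_sym u v : bform S u v = bform S v u.
Proof.
rewrite /bform [in RHS](_ : v *m S *m u^T = (u *m S *m v^T)^T) ?mxE //.
by rewrite !trmx_mul trmxK HS mulmxA.
Qed.

Lemma G_cyc x y z : G x y z = G y z x.
Proof. by rewrite /G Hinv bform_sym. Qed.

Lemma G_coord (i j k : nat) : (k < 7)%N -> G (e i) (e j) (e k) = l * Fv i j k.
Proof.
move=> hk.
rewrite /G brP /bform trmx_mul !mulmxA -(mulmxA _ P S) -(mulmxA _ (P *m S)) HPS.
rewrite -scalemxAr -scalemxAl mxE; congr (_ * _).
rewrite /Fv /e trmx_delta -colE mxE.
rewrite /Defs.eta mul_mx_diag !mxE /etav inordK // mulrC //.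
Qed.

Lemma b_anti x y : b x y = - b y x.
Proof. by rewrite /b br_anti mulNmx. Qed.

Lemma etav2 k : etav k * etav k = 1.
Proof. by rewrite /etav; case: ifP => _; rewrite ?mulr1 ?mulrNN ?mulr1. Qed.

Lemma BFv i j k : b (e i) (e j) 0 (inord k) = etav k * Fv i j k.
Proof. by rewrite /Fv mulrA etav2 mul1r. Qed.

Lemma Fv_cyc i j k : (i < 7)%N -> (k < 7)%N -> Fv i j k = Fv j k i.
Proof.
move=> hi hk; apply: (mulfI Hl); by rewrite -G_coord // -G_coord // G_cyc.
Qed.
Lemma Fv_ji i j k : Fv i j k = - Fv j i k.
Proof. by rewrite /Fv b_anti mxE mulrN. Qed.

Lemma Fv_cyc2 i j k : (j < 7)%N -> (k < 7)%N -> Fv i j k = Fv k i j.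
Proof. by move=> hj hk; rewrite (@Fv_cyc k i j). Qed.
Lemma Fv_ikj i j k : (i < 7)%N -> (j < 7)%N -> (k < 7)%N -> Fv i j k = - Fv i k j.
Proof. by move=> hi hj hk; rewrite (@Fv_cyc i j k) // (@Fv_cyc i k j) // Fv_ji. Qed.
Lemma Fv_kji i j k : (i < 7)%N -> (k < 7)%N -> Fv i j k = - Fv k j i.
Proof. by move=> hi hk; rewrite (@Fv_cyc k j i) // Fv_ji. Qed.
Lemma Fv_iji i j : (i < 7)%N -> Fv i j i = 0.
Proof.
move=> hi; have h : Fv i j i = - Fv i j i by rewrite {1}Fv_cyc // Fv_ji.
by apply/eqP; rewrite -[_ == 0](mulrn_eq0 _ 2) /= mulr2n {2}h subrr.
Qed.
Lemma Fv_iik i k : Fv i i k = 0.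
Proof.
have h : Fv i i k = - Fv i i k by rewrite {1}Fv_ji.
by apply/eqP; rewrite -[_ == 0](mulrn_eq0 _ 2) /= mulr2n {2}h subrr.
Qed.
Lemma Fv_ijj i j : (i < 7)%N -> (j < 7)%N -> Fv i j j = 0.
Proof. by move=> hi hj; rewrite (@Fv_cyc i j j) // Fv_iik. Qed.

Lemma eE1 k : (k < 7)%N -> e k 0 (inord k) = 1.
Proof. by move=> hk; rewrite /e mxE !eqxx. Qed.
Lemma eE0 a k : a != k -> (a < 7)%N -> (k < 7)%N -> e k 0 (inord a) = 0.
Proof.
move=> hak ha hk; rewrite /e mxE eqxx /=.
by rewrite -val_eqE /= !inordK // (negbTE hak).
Qed.
Lemma etav_p a : (a < 3)%N -> etav a = 1.
Proof. by rewrite /etav => ->. Qed.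
Lemma etav_n a : (3 <= a)%N -> etav a = -1.
Proof. by rewrite /etav => h; rewrite ltnNge h. Qed.

Lemma eq0 : - Fv 0 1 4 - Fv 0 2 3 = 0.
Proof.
have H := AD (e 0) (e 0) (e 1) (e 3).
have h0a := BFv 0 0 5.
rewrite (@etav_n 5 erefl) in h0a.
have h0b := @Fv_iik 0 5.
have h1a := BFv 0 1 4.
rewrite (@etav_n 4 erefl) in h1a.
have h2a := BFv 0 3 2.
rewrite (@etav_p 2 erefl) in h2a.
have h2b := @Fv_ikj 0 3 2 erefl erefl erefl.
move: H h0a h0b h1a h2a h2b; generalize (b (e 0) (e 0)) (b (e 0) (e 1)) (b (e 0) (e 3)) => u0 u1 u3 H h0a h0b h1a h2a h2b.
rewrite /phi0 /e3 in H; cbv beta zeta in H; rewrite !eE1 // !eE0 // in H.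
move: H h0a h0b h1a h2a h2b; generalize Fv (@inord 6) => F g *.
lra.
Qed.

Lemma eq1 : Fv 0 1 3 - Fv 0 2 4 = 0.
Proof.
have H := AD (e 0) (e 0) (e 1) (e 4).
have h0a := BFv 0 0 6.
rewrite (@etav_n 6 erefl) in h0a.
have h0b := @Fv_iik 0 6.
have h1a := BFv 0 1 3.
rewrite (@etav_n 3 erefl) in h1a.
have h2a := BFv 0 4 2.
rewrite (@etav_p 2 erefl) in h2a.
have h2b := @Fv_ikj 0 4 2 erefl erefl erefl.
move: H h0a h0b h1a h2a h2b; generalize (b (e 0) (e 0)) (b (e 0) (e 1)) (b (e 0) (e 4)) => u0 u1 u4 H h0a h0b h1a h2a h2b.
rewrite /phi0 /e3 in H; cbv beta zeta in H; rewrite !eE1 // !eE0 // in H.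
move: H h0a h0b h1a h2a h2b; generalize Fv (@inord 6) => F g *.
lra.
Qed.

Lemma eq2 : - Fv 0 1 6 - Fv 0 2 5 = 0.
Proof.
have H := AD (e 0) (e 0) (e 1) (e 5).
have h0a := BFv 0 0 3.
rewrite (@etav_n 3 erefl) in h0a.
have h0b := @Fv_iik 0 3.
have h1a := BFv 0 1 6.
rewrite (@etav_n 6 erefl) in h1a.
have h2a := BFv 0 5 2.
rewrite (@etav_p 2 erefl) in h2a.
have h2b := @Fv_ikj 0 5 2 erefl erefl erefl.
move: H h0a h0b h1a h2a h2b; generalize (b (e 0) (e 0)) (b (e 0) (e 1)) (b (e 0) (e 5)) => u0 u1 u5 H h0a h0b h1a h2a h2b.
rewrite /phi0 /e3 in H; cbv beta zeta in H; rewrite !eE1 // !eE0 // in H.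
move: H h0a h0b h1a h2a h2b; generalize Fv (@inord 6) => F g *.
lra.
Qed.

Lemma eq3 : Fv 0 1 5 - Fv 0 2 6 = 0.
Proof.
have H := AD (e 0) (e 0) (e 1) (e 6).
have h0a := BFv 0 0 4.
rewrite (@etav_n 4 erefl) in h0a.
have h0b := @Fv_iik 0 4.
have h1a := BFv 0 1 5.
rewrite (@etav_n 5 erefl) in h1a.
have h2a := BFv 0 6 2.
rewrite (@etav_p 2 erefl) in h2a.
have h2b := @Fv_ikj 0 6 2 erefl erefl erefl.
move: H h0a h0b h1a h2a h2b; generalize (b (e 0) (e 0)) (b (e 0) (e 1)) (b (e 0) (e 6)) => u0 u1 u6 H h0a h0b h1a h2a h2b.
rewrite /phi0 /e3 in H; cbv beta zeta in H; rewrite !eE1 // !eE0 // in H.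
move: H h0a h0b h1a h2a h2b; generalize Fv (@inord 6) => F g *.
lra.
Qed.

Lemma eq4 : - Fv 0 3 6 - Fv 0 4 5 = 0.
Proof.
have H := AD (e 0) (e 0) (e 3) (e 5).
have h0a := BFv 0 0 1.
rewrite (@etav_p 1 erefl) in h0a.
have h0b := @Fv_iik 0 1.
have h1a := BFv 0 3 6.
rewrite (@etav_n 6 erefl) in h1a.
have h2a := BFv 0 5 4.
rewrite (@etav_n 4 erefl) in h2a.
have h2b := @Fv_ikj 0 5 4 erefl erefl erefl.
move: H h0a h0b h1a h2a h2b; generalize (b (e 0) (e 0)) (b (e 0) (e 3)) (b (e 0) (e 5)) => u0 u3 u5 H h0a h0b h1a h2a h2b.
rewrite /phi0 /e3 in H; cbv beta zeta in H; rewrite !eE1 // !eE0 // in H.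
move: H h0a h0b h1a h2a h2b; generalize Fv (@inord 6) => F g *.
lra.
Qed.

Lemma eq5 : Fv 0 3 5 - Fv 0 4 6 = 0.
Proof.
have H := AD (e 0) (e 0) (e 3) (e 6).
have h0a := BFv 0 0 2.
rewrite (@etav_p 2 erefl) in h0a.
have h0b := @Fv_iik 0 2.
have h1a := BFv 0 3 5.
rewrite (@etav_n 5 erefl) in h1a.
have h2a := BFv 0 6 4.
rewrite (@etav_n 4 erefl) in h2a.
have h2b := @Fv_ikj 0 6 4 erefl erefl erefl.
move: H h0a h0b h1a h2a h2b; generalize (b (e 0) (e 0)) (b (e 0) (e 3)) (b (e 0) (e 6)) => u0 u3 u6 H h0a h0b h1a h2a h2b.
rewrite /phi0 /e3 in H; cbv beta zeta in H; rewrite !eE1 // !eE0 // in H.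
move: H h0a h0b h1a h2a h2b; generalize Fv (@inord 6) => F g *.
lra.
Qed.

Lemma eq6 : - Fv 0 1 5 - Fv 1 2 3 = 0.
Proof.
have H := AD (e 1) (e 0) (e 1) (e 3).
have h0a := BFv 1 0 5.
rewrite (@etav_n 5 erefl) in h0a.
have h0b := @Fv_ji 1 0 5.
have h1a := BFv 1 1 4.
rewrite (@etav_n 4 erefl) in h1a.
have h1b := @Fv_iik 1 4.
have h2a := BFv 1 3 2.
rewrite (@etav_p 2 erefl) in h2a.
have h2b := @Fv_ikj 1 3 2 erefl erefl erefl.
move: H h0a h0b h1a h1b h2a h2b; generalize (b (e 1) (e 0)) (b (e 1) (e 1)) (b (e 1) (e 3)) => u0 u1 u3 H h0a h0b h1a h1b h2a h2b.
rewrite /phi0 /e3 in H; cbv beta zeta in H; rewrite !eE1 // !eE0 // in H.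
move: H h0a h0b h1a h1b h2a h2b; generalize Fv (@inord 6) => F g *.
lra.
Qed.

Lemma eq7 : Fv 0 1 6 - Fv 1 2 4 = 0.
Proof.
have H := AD (e 1) (e 0) (e 1) (e 4).
have h0a := BFv 1 0 6.
rewrite (@etav_n 6 erefl) in h0a.
have h0b := @Fv_ji 1 0 6.
have h1a := BFv 1 1 3.
rewrite (@etav_n 3 erefl) in h1a.
have h1b := @Fv_iik 1 3.
have h2a := BFv 1 4 2.
rewrite (@etav_p 2 erefl) in h2a.
have h2b := @Fv_ikj 1 4 2 erefl erefl erefl.
move: H h0a h0b h1a h1b h2a h2b; generalize (b (e 1) (e 0)) (b (e 1) (e 1)) (b (e 1) (e 4)) => u0 u1 u4 H h0a h0b h1a h1b h2a h2b.
rewrite /phi0 /e3 in H; cbv beta zeta in H; rewrite !eE1 // !eE0 // in H.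
move: H h0a h0b h1a h1b h2a h2b; generalize Fv (@inord 6) => F g *.
lra.
Qed.

Lemma eq8 : Fv 0 1 3 - Fv 1 2 5 = 0.
Proof.
have H := AD (e 1) (e 0) (e 1) (e 5).
have h0a := BFv 1 0 3.
rewrite (@etav_n 3 erefl) in h0a.
have h0b := @Fv_ji 1 0 3.
have h1a := BFv 1 1 6.
rewrite (@etav_n 6 erefl) in h1a.
have h1b := @Fv_iik 1 6.
have h2a := BFv 1 5 2.
rewrite (@etav_p 2 erefl) in h2a.
have h2b := @Fv_ikj 1 5 2 erefl erefl erefl.
move: H h0a h0b h1a h1b h2a h2b; generalize (b (e 1) (e 0)) (b (e 1) (e 1)) (b (e 1) (e 5)) => u0 u1 u5 H h0a h0b h1a h1b h2a h2b.
rewrite /phi0 /e3 in H; cbv beta zeta in H; rewrite !eE1 // !eE0 // in H.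
move: H h0a h0b h1a h1b h2a h2b; generalize Fv (@inord 6) => F g *.
lra.
Qed.

Lemma eq9 : - Fv 0 1 4 - Fv 1 2 6 = 0.
Proof.
have H := AD (e 1) (e 0) (e 1) (e 6).
have h0a := BFv 1 0 4.
rewrite (@etav_n 4 erefl) in h0a.
have h0b := @Fv_ji 1 0 4.
have h1a := BFv 1 1 5.
rewrite (@etav_n 5 erefl) in h1a.
have h1b := @Fv_iik 1 5.
have h2a := BFv 1 6 2.
rewrite (@etav_p 2 erefl) in h2a.
have h2b := @Fv_ikj 1 6 2 erefl erefl erefl.
move: H h0a h0b h1a h1b h2a h2b; generalize (b (e 1) (e 0)) (b (e 1) (e 1)) (b (e 1) (e 6)) => u0 u1 u6 H h0a h0b h1a h1b h2a h2b.
rewrite /phi0 /e3 in H; cbv beta zeta in H; rewrite !eE1 // !eE0 // in H.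
move: H h0a h0b h1a h1b h2a h2b; generalize Fv (@inord 6) => F g *.
lra.
Qed.

Lemma eq10 : - Fv 1 3 6 - Fv 1 4 5 = 0.
Proof.
have H := AD (e 1) (e 0) (e 3) (e 5).
have h0a := BFv 1 0 1.
rewrite (@etav_p 1 erefl) in h0a.
have h0b := @Fv_iji 1 0 erefl.
have h1a := BFv 1 3 6.
rewrite (@etav_n 6 erefl) in h1a.
have h2a := BFv 1 5 4.
rewrite (@etav_n 4 erefl) in h2a.
have h2b := @Fv_ikj 1 5 4 erefl erefl erefl.
move: H h0a h0b h1a h2a h2b; generalize (b (e 1) (e 0)) (b (e 1) (e 3)) (b (e 1) (e 5)) => u0 u3 u5 H h0a h0b h1a h2a h2b.
rewrite /phi0 /e3 in H; cbv beta zeta in H; rewrite !eE1 // !eE0 // in H.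
move: H h0a h0b h1a h2a h2b; generalize Fv (@inord 6) => F g *.
lra.
Qed.

Lemma eq11 : - Fv 1 3 4 - Fv 1 5 6 = 0.
Proof.
have H := AD (e 1) (e 1) (e 3) (e 6).
have h0a := BFv 1 1 2.
rewrite (@etav_p 2 erefl) in h0a.
have h0b := @Fv_iik 1 2.
have h1a := BFv 1 3 4.
rewrite (@etav_n 4 erefl) in h1a.
have h2a := BFv 1 6 5.
rewrite (@etav_n 5 erefl) in h2a.
have h2b := @Fv_ikj 1 6 5 erefl erefl erefl.
move: H h0a h0b h1a h2a h2b; generalize (b (e 1) (e 1)) (b (e 1) (e 3)) (b (e 1) (e 6)) => u1 u3 u6 H h0a h0b h1a h2a h2b.
rewrite /phi0 /e3 in H; cbv beta zeta in H; rewrite !eE1 // !eE0 // in H.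
move: H h0a h0b h1a h2a h2b; generalize Fv (@inord 6) => F g *.
lra.
Qed.

Lemma eq12 : - Fv 0 2 5 + Fv 1 2 4 = 0.
Proof.
have H := AD (e 2) (e 0) (e 1) (e 3).
have h0a := BFv 2 0 5.
rewrite (@etav_n 5 erefl) in h0a.
have h0b := @Fv_ji 2 0 5.
have h1a := BFv 2 1 4.
rewrite (@etav_n 4 erefl) in h1a.
have h1b := @Fv_ji 2 1 4.
have h2a := BFv 2 3 2.
rewrite (@etav_p 2 erefl) in h2a.
have h2b := @Fv_iji 2 3 erefl.
move: H h0a h0b h1a h1b h2a h2b; generalize (b (e 2) (e 0)) (b (e 2) (e 1)) (b (e 2) (e 3)) => u0 u1 u3 H h0a h0b h1a h1b h2a h2b.
rewrite /phi0 /e3 in H; cbv beta zeta in H; rewrite !eE1 // !eE0 // in H.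
move: H h0a h0b h1a h1b h2a h2b; generalize Fv (@inord 6) => F g *.
lra.
Qed.

Lemma eq13 : Fv 0 2 6 - Fv 1 2 3 = 0.
Proof.
have H := AD (e 2) (e 0) (e 1) (e 4).
have h0a := BFv 2 0 6.
rewrite (@etav_n 6 erefl) in h0a.
have h0b := @Fv_ji 2 0 6.
have h1a := BFv 2 1 3.
rewrite (@etav_n 3 erefl) in h1a.
have h1b := @Fv_ji 2 1 3.
have h2a := BFv 2 4 2.
rewrite (@etav_p 2 erefl) in h2a.
have h2b := @Fv_iji 2 4 erefl.
move: H h0a h0b h1a h1b h2a h2b; generalize (b (e 2) (e 0)) (b (e 2) (e 1)) (b (e 2) (e 4)) => u0 u1 u4 H h0a h0b h1a h1b h2a h2b.
rewrite /phi0 /e3 in H; cbv beta zeta in H; rewrite !eE1 // !eE0 // in H.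
move: H h0a h0b h1a h1b h2a h2b; generalize Fv (@inord 6) => F g *.
lra.
Qed.

Lemma eq14 : Fv 0 2 3 + Fv 1 2 6 = 0.
Proof.
have H := AD (e 2) (e 0) (e 1) (e 5).
have h0a := BFv 2 0 3.
rewrite (@etav_n 3 erefl) in h0a.
have h0b := @Fv_ji 2 0 3.
have h1a := BFv 2 1 6.
rewrite (@etav_n 6 erefl) in h1a.
have h1b := @Fv_ji 2 1 6.
have h2a := BFv 2 5 2.
rewrite (@etav_p 2 erefl) in h2a.
have h2b := @Fv_iji 2 5 erefl.
move: H h0a h0b h1a h1b h2a h2b; generalize (b (e 2) (e 0)) (b (e 2) (e 1)) (b (e 2) (e 5)) => u0 u1 u5 H h0a h0b h1a h1b h2a h2b.
rewrite /phi0 /e3 in H; cbv beta zeta in H; rewrite !eE1 // !eE0 // in H.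
move: H h0a h0b h1a h1b h2a h2b; generalize Fv (@inord 6) => F g *.
lra.
Qed.

Lemma eq15 : - Fv 0 2 4 - Fv 1 2 5 = 0.
Proof.
have H := AD (e 2) (e 0) (e 1) (e 6).
have h0a := BFv 2 0 4.
rewrite (@etav_n 4 erefl) in h0a.
have h0b := @Fv_ji 2 0 4.
have h1a := BFv 2 1 5.
rewrite (@etav_n 5 erefl) in h1a.
have h1b := @Fv_ji 2 1 5.
have h2a := BFv 2 6 2.
rewrite (@etav_p 2 erefl) in h2a.
have h2b := @Fv_iji 2 6 erefl.
move: H h0a h0b h1a h1b h2a h2b; generalize (b (e 2) (e 0)) (b (e 2) (e 1)) (b (e 2) (e 6)) => u0 u1 u6 H h0a h0b h1a h1b h2a h2b.
rewrite /phi0 /e3 in H; cbv beta zeta in H; rewrite !eE1 // !eE0 // in H.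
move: H h0a h0b h1a h1b h2a h2b; generalize Fv (@inord 6) => F g *.
lra.
Qed.

Lemma eq16 : Fv 2 3 5 - Fv 2 4 6 = 0.
Proof.
have H := AD (e 2) (e 0) (e 3) (e 6).
have h0a := BFv 2 0 2.
rewrite (@etav_p 2 erefl) in h0a.
have h0b := @Fv_iji 2 0 erefl.
have h1a := BFv 2 3 5.
rewrite (@etav_n 5 erefl) in h1a.
have h2a := BFv 2 6 4.
rewrite (@etav_n 4 erefl) in h2a.
have h2b := @Fv_ikj 2 6 4 erefl erefl erefl.
move: H h0a h0b h1a h2a h2b; generalize (b (e 2) (e 0)) (b (e 2) (e 3)) (b (e 2) (e 6)) => u0 u3 u6 H h0a h0b h1a h2a h2b.
rewrite /phi0 /e3 in H; cbv beta zeta in H; rewrite !eE1 // !eE0 // in H.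
move: H h0a h0b h1a h2a h2b; generalize Fv (@inord 6) => F g *.
lra.
Qed.

Lemma eq17 : - Fv 2 3 4 - Fv 2 5 6 = 0.
Proof.
have H := AD (e 2) (e 1) (e 3) (e 6).
have h0a := BFv 2 1 2.
rewrite (@etav_p 2 erefl) in h0a.
have h0b := @Fv_iji 2 1 erefl.
have h1a := BFv 2 3 4.
rewrite (@etav_n 4 erefl) in h1a.
have h2a := BFv 2 6 5.
rewrite (@etav_n 5 erefl) in h2a.
have h2b := @Fv_ikj 2 6 5 erefl erefl erefl.
move: H h0a h0b h1a h2a h2b; generalize (b (e 2) (e 1)) (b (e 2) (e 3)) (b (e 2) (e 6)) => u1 u3 u6 H h0a h0b h1a h2a h2b.
rewrite /phi0 /e3 in H; cbv beta zeta in H; rewrite !eE1 // !eE0 // in H.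
move: H h0a h0b h1a h2a h2b; generalize Fv (@inord 6) => F g *.
lra.
Qed.

Lemma eq18 : - Fv 0 3 5 + Fv 1 3 4 = 0.
Proof.
have H := AD (e 3) (e 0) (e 1) (e 3).
have h0a := BFv 3 0 5.
rewrite (@etav_n 5 erefl) in h0a.
have h0b := @Fv_ji 3 0 5.
have h1a := BFv 3 1 4.
rewrite (@etav_n 4 erefl) in h1a.
have h1b := @Fv_ji 3 1 4.
have h2a := BFv 3 3 2.
rewrite (@etav_p 2 erefl) in h2a.
have h2b := @Fv_iik 3 2.
move: H h0a h0b h1a h1b h2a h2b; generalize (b (e 3) (e 0)) (b (e 3) (e 1)) (b (e 3) (e 3)) => u0 u1 u3 H h0a h0b h1a h1b h2a h2b.
rewrite /phi0 /e3 in H; cbv beta zeta in H; rewrite !eE1 // !eE0 // in H.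
move: H h0a h0b h1a h1b h2a h2b; generalize Fv (@inord 6) => F g *.
lra.
Qed.

Lemma eq19 : Fv 0 3 6 + Fv 2 3 4 = 0.
Proof.
have H := AD (e 3) (e 0) (e 1) (e 4).
have h0a := BFv 3 0 6.
rewrite (@etav_n 6 erefl) in h0a.
have h0b := @Fv_ji 3 0 6.
have h1a := BFv 3 1 3.
rewrite (@etav_n 3 erefl) in h1a.
have h1b := @Fv_iji 3 1 erefl.
have h2a := BFv 3 4 2.
rewrite (@etav_p 2 erefl) in h2a.
have h2b := @Fv_cyc2 3 4 2 erefl erefl.
move: H h0a h0b h1a h1b h2a h2b; generalize (b (e 3) (e 0)) (b (e 3) (e 1)) (b (e 3) (e 4)) => u0 u1 u4 H h0a h0b h1a h1b h2a h2b.
rewrite /phi0 /e3 in H; cbv beta zeta in H; rewrite !eE1 // !eE0 // in H.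
move: H h0a h0b h1a h1b h2a h2b; generalize Fv (@inord 6) => F g *.
lra.
Qed.

Lemma eq20 : Fv 1 3 6 + Fv 2 3 5 = 0.
Proof.
have H := AD (e 3) (e 0) (e 1) (e 5).
have h0a := BFv 3 0 3.
rewrite (@etav_n 3 erefl) in h0a.
have h0b := @Fv_iji 3 0 erefl.
have h1a := BFv 3 1 6.
rewrite (@etav_n 6 erefl) in h1a.
have h1b := @Fv_ji 3 1 6.
have h2a := BFv 3 5 2.
rewrite (@etav_p 2 erefl) in h2a.
have h2b := @Fv_cyc2 3 5 2 erefl erefl.
move: H h0a h0b h1a h1b h2a h2b; generalize (b (e 3) (e 0)) (b (e 3) (e 1)) (b (e 3) (e 5)) => u0 u1 u5 H h0a h0b h1a h1b h2a h2b.
rewrite /phi0 /e3 in H; cbv beta zeta in H; rewrite !eE1 // !eE0 // in H.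
move: H h0a h0b h1a h1b h2a h2b; generalize Fv (@inord 6) => F g *.
lra.
Qed.

Lemma eq21 : - Fv 0 1 3 - Fv 3 4 5 = 0.
Proof.
have H := AD (e 3) (e 0) (e 3) (e 5).
have h0a := BFv 3 0 1.
rewrite (@etav_p 1 erefl) in h0a.
have h0b := @Fv_cyc 3 0 1 erefl erefl.
have h1a := BFv 3 3 6.
rewrite (@etav_n 6 erefl) in h1a.
have h1b := @Fv_iik 3 6.
have h2a := BFv 3 5 4.
rewrite (@etav_n 4 erefl) in h2a.
have h2b := @Fv_ikj 3 5 4 erefl erefl erefl.
move: H h0a h0b h1a h1b h2a h2b; generalize (b (e 3) (e 0)) (b (e 3) (e 3)) (b (e 3) (e 5)) => u0 u3 u5 H h0a h0b h1a h1b h2a h2b.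
rewrite /phi0 /e3 in H; cbv beta zeta in H; rewrite !eE1 // !eE0 // in H.
move: H h0a h0b h1a h1b h2a h2b; generalize Fv (@inord 6) => F g *.
lra.
Qed.

Lemma eq22 : Fv 0 2 3 - Fv 3 4 6 = 0.
Proof.
have H := AD (e 3) (e 0) (e 3) (e 6).
have h0a := BFv 3 0 2.
rewrite (@etav_p 2 erefl) in h0a.
have h0b := @Fv_cyc 3 0 2 erefl erefl.
have h1a := BFv 3 3 5.
rewrite (@etav_n 5 erefl) in h1a.
have h1b := @Fv_iik 3 5.
have h2a := BFv 3 6 4.
rewrite (@etav_n 4 erefl) in h2a.
have h2b := @Fv_ikj 3 6 4 erefl erefl erefl.
move: H h0a h0b h1a h1b h2a h2b; generalize (b (e 3) (e 0)) (b (e 3) (e 3)) (b (e 3) (e 6)) => u0 u3 u6 H h0a h0b h1a h1b h2a h2b.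
rewrite /phi0 /e3 in H; cbv beta zeta in H; rewrite !eE1 // !eE0 // in H.
move: H h0a h0b h1a h1b h2a h2b; generalize Fv (@inord 6) => F g *.
lra.
Qed.

Lemma eq23 : Fv 1 2 3 - Fv 3 5 6 = 0.
Proof.
have H := AD (e 3) (e 1) (e 3) (e 6).
have h0a := BFv 3 1 2.
rewrite (@etav_p 2 erefl) in h0a.
have h0b := @Fv_cyc 3 1 2 erefl erefl.
have h1a := BFv 3 3 4.
rewrite (@etav_n 4 erefl) in h1a.
have h1b := @Fv_iik 3 4.
have h2a := BFv 3 6 5.
rewrite (@etav_n 5 erefl) in h2a.
have h2b := @Fv_ikj 3 6 5 erefl erefl erefl.
move: H h0a h0b h1a h1b h2a h2b; generalize (b (e 3) (e 1)) (b (e 3) (e 3)) (b (e 3) (e 6)) => u1 u3 u6 H h0a h0b h1a h1b h2a h2b.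
rewrite /phi0 /e3 in H; cbv beta zeta in H; rewrite !eE1 // !eE0 // in H.
move: H h0a h0b h1a h1b h2a h2b; generalize Fv (@inord 6) => F g *.
lra.
Qed.

Lemma eq24 : - Fv 0 4 5 - Fv 2 3 4 = 0.
Proof.
have H := AD (e 4) (e 0) (e 1) (e 3).
have h0a := BFv 4 0 5.
rewrite (@etav_n 5 erefl) in h0a.
have h0b := @Fv_ji 4 0 5.
have h1a := BFv 4 1 4.
rewrite (@etav_n 4 erefl) in h1a.
have h1b := @Fv_iji 4 1 erefl.
have h2a := BFv 4 3 2.
rewrite (@etav_p 2 erefl) in h2a.
have h2b := @Fv_kji 4 3 2 erefl erefl.
move: H h0a h0b h1a h1b h2a h2b; generalize (b (e 4) (e 0)) (b (e 4) (e 1)) (b (e 4) (e 3)) => u0 u1 u3 H h0a h0b h1a h1b h2a h2b.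
rewrite /phi0 /e3 in H; cbv beta zeta in H; rewrite !eE1 // !eE0 // in H.
move: H h0a h0b h1a h1b h2a h2b; generalize Fv (@inord 6) => F g *.
lra.
Qed.

Lemma eq25 : Fv 0 4 6 + Fv 1 3 4 = 0.
Proof.
have H := AD (e 4) (e 0) (e 1) (e 4).
have h0a := BFv 4 0 6.
rewrite (@etav_n 6 erefl) in h0a.
have h0b := @Fv_ji 4 0 6.
have h1a := BFv 4 1 3.
rewrite (@etav_n 3 erefl) in h1a.
have h1b := @Fv_cyc 4 1 3 erefl erefl.
have h2a := BFv 4 4 2.
rewrite (@etav_p 2 erefl) in h2a.
have h2b := @Fv_iik 4 2.
move: H h0a h0b h1a h1b h2a h2b; generalize (b (e 4) (e 0)) (b (e 4) (e 1)) (b (e 4) (e 4)) => u0 u1 u4 H h0a h0b h1a h1b h2a h2b.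
rewrite /phi0 /e3 in H; cbv beta zeta in H; rewrite !eE1 // !eE0 // in H.
move: H h0a h0b h1a h1b h2a h2b; generalize Fv (@inord 6) => F g *.
lra.
Qed.

Lemma eq26 : Fv 1 2 4 - Fv 4 5 6 = 0.
Proof.
have H := AD (e 4) (e 1) (e 3) (e 6).
have h0a := BFv 4 1 2.
rewrite (@etav_p 2 erefl) in h0a.
have h0b := @Fv_cyc 4 1 2 erefl erefl.
have h1a := BFv 4 3 4.
rewrite (@etav_n 4 erefl) in h1a.
have h1b := @Fv_iji 4 3 erefl.
have h2a := BFv 4 6 5.
rewrite (@etav_n 5 erefl) in h2a.
have h2b := @Fv_ikj 4 6 5 erefl erefl erefl.
move: H h0a h0b h1a h1b h2a h2b; generalize (b (e 4) (e 1)) (b (e 4) (e 3)) (b (e 4) (e 6)) => u1 u3 u6 H h0a h0b h1a h1b h2a h2b.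
rewrite /phi0 /e3 in H; cbv beta zeta in H; rewrite !eE1 // !eE0 // in H.
move: H h0a h0b h1a h1b h2a h2b; generalize Fv (@inord 6) => F g *.
lra.
Qed.

Lemma eq27 : - Fv 1 4 5 - Fv 2 3 5 = 0.
Proof.
have H := AD (e 5) (e 0) (e 1) (e 3).
have h0a := BFv 5 0 5.
rewrite (@etav_n 5 erefl) in h0a.
have h0b := @Fv_iji 5 0 erefl.
have h1a := BFv 5 1 4.
rewrite (@etav_n 4 erefl) in h1a.
have h1b := @Fv_cyc 5 1 4 erefl erefl.
have h2a := BFv 5 3 2.
rewrite (@etav_p 2 erefl) in h2a.
have h2b := @Fv_kji 5 3 2 erefl erefl.
move: H h0a h0b h1a h1b h2a h2b; generalize (b (e 5) (e 0)) (b (e 5) (e 1)) (b (e 5) (e 3)) => u0 u1 u3 H h0a h0b h1a h1b h2a h2b.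
rewrite /phi0 /e3 in H; cbv beta zeta in H; rewrite !eE1 // !eE0 // in H.
move: H h0a h0b h1a h1b h2a h2b; generalize Fv (@inord 6) => F g *.
lra.
Qed.

Lemma eq28 : Fv 0 1 2 - Fv 0 3 4 - Fv 0 5 6 = 0.
Proof.
have H := AD (e 0) (e 1) (e 3) (e 6).
have h0a := BFv 0 1 2.
rewrite (@etav_p 2 erefl) in h0a.
have h1a := BFv 0 3 4.
rewrite (@etav_n 4 erefl) in h1a.
have h2a := BFv 0 6 5.
rewrite (@etav_n 5 erefl) in h2a.
have h2b := @Fv_ikj 0 6 5 erefl erefl erefl.
move: H h0a h1a h2a h2b; generalize (b (e 0) (e 1)) (b (e 0) (e 3)) (b (e 0) (e 6)) => u1 u3 u6 H h0a h1a h2a h2b.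
rewrite /phi0 /e3 in H; cbv beta zeta in H; rewrite !eE1 // !eE0 // in H.
move: H h0a h1a h2a h2b; generalize Fv (@inord 6) => F g *.
lra.
Qed.

Lemma eq29 : - Fv 0 1 2 + Fv 1 3 5 - Fv 1 4 6 = 0.
Proof.
have H := AD (e 1) (e 0) (e 3) (e 6).
have h0a := BFv 1 0 2.
rewrite (@etav_p 2 erefl) in h0a.
have h0b := @Fv_ji 1 0 2.
have h1a := BFv 1 3 5.
rewrite (@etav_n 5 erefl) in h1a.
have h2a := BFv 1 6 4.
rewrite (@etav_n 4 erefl) in h2a.
have h2b := @Fv_ikj 1 6 4 erefl erefl erefl.
move: H h0a h0b h1a h2a h2b; generalize (b (e 1) (e 0)) (b (e 1) (e 3)) (b (e 1) (e 6)) => u0 u3 u6 H h0a h0b h1a h2a h2b.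
rewrite /phi0 /e3 in H; cbv beta zeta in H; rewrite !eE1 // !eE0 // in H.
move: H h0a h0b h1a h2a h2b; generalize Fv (@inord 6) => F g *.
lra.
Qed.

Lemma eq30 : - Fv 0 1 2 - Fv 2 3 6 - Fv 2 4 5 = 0.
Proof.
have H := AD (e 2) (e 0) (e 3) (e 5).
have h0a := BFv 2 0 1.
rewrite (@etav_p 1 erefl) in h0a.
have h0b := @Fv_cyc 2 0 1 erefl erefl.
have h1a := BFv 2 3 6.
rewrite (@etav_n 6 erefl) in h1a.
have h2a := BFv 2 5 4.
rewrite (@etav_n 4 erefl) in h2a.
have h2b := @Fv_ikj 2 5 4 erefl erefl erefl.
move: H h0a h0b h1a h2a h2b; generalize (b (e 2) (e 0)) (b (e 2) (e 3)) (b (e 2) (e 5)) => u0 u3 u5 H h0a h0b h1a h2a h2b.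
rewrite /phi0 /e3 in H; cbv beta zeta in H; rewrite !eE1 // !eE0 // in H.
move: H h0a h0b h1a h2a h2b; generalize Fv (@inord 6) => F g *.
lra.
Qed.

Lemma eq31 : - Fv 0 3 4 - Fv 1 3 5 + Fv 2 3 6 = 0.
Proof.
have H := AD (e 3) (e 0) (e 1) (e 6).
have h0a := BFv 3 0 4.
rewrite (@etav_n 4 erefl) in h0a.
have h0b := @Fv_ji 3 0 4.
have h1a := BFv 3 1 5.
rewrite (@etav_n 5 erefl) in h1a.
have h1b := @Fv_ji 3 1 5.
have h2a := BFv 3 6 2.
rewrite (@etav_p 2 erefl) in h2a.
have h2b := @Fv_cyc2 3 6 2 erefl erefl.
move: H h0a h0b h1a h1b h2a h2b; generalize (b (e 3) (e 0)) (b (e 3) (e 1)) (b (e 3) (e 6)) => u0 u1 u6 H h0a h0b h1a h1b h2a h2b.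
rewrite /phi0 /e3 in H; cbv beta zeta in H; rewrite !eE1 // !eE0 // in H.
move: H h0a h0b h1a h1b h2a h2b; generalize Fv (@inord 6) => F g *.
lra.
Qed.

Lemma eq32 : - Fv 0 3 4 + Fv 1 4 6 + Fv 2 4 5 = 0.
Proof.
have H := AD (e 4) (e 0) (e 1) (e 5).
have h0a := BFv 4 0 3.
rewrite (@etav_n 3 erefl) in h0a.
have h0b := @Fv_cyc 4 0 3 erefl erefl.
have h1a := BFv 4 1 6.
rewrite (@etav_n 6 erefl) in h1a.
have h1b := @Fv_ji 4 1 6.
have h2a := BFv 4 5 2.
rewrite (@etav_p 2 erefl) in h2a.
have h2b := @Fv_cyc2 4 5 2 erefl erefl.
move: H h0a h0b h1a h1b h2a h2b; generalize (b (e 4) (e 0)) (b (e 4) (e 1)) (b (e 4) (e 5)) => u0 u1 u5 H h0a h0b h1a h1b h2a h2b.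
rewrite /phi0 /e3 in H; cbv beta zeta in H; rewrite !eE1 // !eE0 // in H.
move: H h0a h0b h1a h1b h2a h2b; generalize Fv (@inord 6) => F g *.
lra.
Qed.

Lemma eq33 : Fv 0 5 6 + Fv 1 3 5 - Fv 2 4 5 = 0.
Proof.
have H := AD (e 5) (e 0) (e 1) (e 4).
have h0a := BFv 5 0 6.
rewrite (@etav_n 6 erefl) in h0a.
have h0b := @Fv_ji 5 0 6.
have h1a := BFv 5 1 3.
rewrite (@etav_n 3 erefl) in h1a.
have h1b := @Fv_cyc 5 1 3 erefl erefl.
have h2a := BFv 5 4 2.
rewrite (@etav_p 2 erefl) in h2a.
have h2b := @Fv_kji 5 4 2 erefl erefl.
move: H h0a h0b h1a h1b h2a h2b; generalize (b (e 5) (e 0)) (b (e 5) (e 1)) (b (e 5) (e 4)) => u0 u1 u4 H h0a h0b h1a h1b h2a h2b.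
rewrite /phi0 /e3 in H; cbv beta zeta in H; rewrite !eE1 // !eE0 // in H.
move: H h0a h0b h1a h1b h2a h2b; generalize Fv (@inord 6) => F g *.
lra.
Qed.

Lemma eq34 : Fv 0 5 6 - Fv 1 4 6 - Fv 2 3 6 = 0.
Proof.
have H := AD (e 6) (e 0) (e 1) (e 3).
have h0a := BFv 6 0 5.
rewrite (@etav_n 5 erefl) in h0a.
have h0b := @Fv_cyc 6 0 5 erefl erefl.
have h1a := BFv 6 1 4.
rewrite (@etav_n 4 erefl) in h1a.
have h1b := @Fv_cyc 6 1 4 erefl erefl.
have h2a := BFv 6 3 2.
rewrite (@etav_p 2 erefl) in h2a.
have h2b := @Fv_kji 6 3 2 erefl erefl.
move: H h0a h0b h1a h1b h2a h2b; generalize (b (e 6) (e 0)) (b (e 6) (e 1)) (b (e 6) (e 3)) => u0 u1 u3 H h0a h0b h1a h1b h2a h2b.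
rewrite /phi0 /e3 in H; cbv beta zeta in H; rewrite !eE1 // !eE0 // in H.
move: H h0a h0b h1a h1b h2a h2b; generalize Fv (@inord 6) => F g *.
lra.
Qed.

Lemma F012 : Fv 0 1 2 = 0.
Proof.
have := eq28. have := eq29. have := eq30. have := eq31. have := eq32. have := eq33. have := eq34. 
generalize Fv => F *; lra.
Qed.
Lemma F013 : Fv 0 1 3 = 0.
Proof.
have := eq1. have := eq8. have := eq15. have := eq21. 
generalize Fv => F *; lra.
Qed.
Lemma F014 : Fv 0 1 4 = 0.
Proof.
have := eq0. have := eq9. have := eq14. have := eq22. 
generalize Fv => F *; lra.
Qed.
Lemma F015 : Fv 0 1 5 = 0.
Proof.
have := eq3. have := eq6. have := eq13. have := eq23. 
generalize Fv => F *; lra.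
Qed.
Lemma F016 : Fv 0 1 6 = 0.
Proof.
have := eq2. have := eq7. have := eq12. have := eq26. 
generalize Fv => F *; lra.
Qed.
Lemma F023 : Fv 0 2 3 = 0.
Proof.
have := eq0. have := eq9. have := eq14. have := eq22. 
generalize Fv => F *; lra.
Qed.
Lemma F024 : Fv 0 2 4 = 0.
Proof.
have := eq1. have := eq8. have := eq15. have := eq21. 
generalize Fv => F *; lra.
Qed.
Lemma F025 : Fv 0 2 5 = 0.
Proof.
have := eq2. have := eq7. have := eq12. have := eq26. 
generalize Fv => F *; lra.
Qed.
Lemma F026 : Fv 0 2 6 = 0.
Proof.
have := eq3. have := eq6. have := eq13. have := eq23. 
generalize Fv => F *; lra.
Qed.
Lemma F034 : Fv 0 3 4 = 0.
Proof.
have := eq28. have := eq29. have := eq30. have := eq31. have := eq32. have := eq33. have := eq34. 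
generalize Fv => F *; lra.
Qed.
Lemma F035 : Fv 0 3 5 = 0.
Proof.
have := eq5. have := eq11. have := eq18. have := eq25. 
generalize Fv => F *; lra.
Qed.
Lemma F036 : Fv 0 3 6 = 0.
Proof.
have := eq4. have := eq17. have := eq19. have := eq24. 
generalize Fv => F *; lra.
Qed.
Lemma F045 : Fv 0 4 5 = 0.
Proof.
have := eq4. have := eq17. have := eq19. have := eq24. 
generalize Fv => F *; lra.
Qed.
Lemma F046 : Fv 0 4 6 = 0.
Proof.
have := eq5. have := eq11. have := eq18. have := eq25. 
generalize Fv => F *; lra.
Qed.
Lemma F056 : Fv 0 5 6 = 0.
Proof.
have := eq28. have := eq29. have := eq30. have := eq31. have := eq32. have := eq33. have := eq34. 
generalize Fv => F *; lra.
Qed.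
Lemma F123 : Fv 1 2 3 = 0.
Proof.
have := eq3. have := eq6. have := eq13. have := eq23. 
generalize Fv => F *; lra.
Qed.
Lemma F124 : Fv 1 2 4 = 0.
Proof.
have := eq2. have := eq7. have := eq12. have := eq26. 
generalize Fv => F *; lra.
Qed.
Lemma F125 : Fv 1 2 5 = 0.
Proof.
have := eq1. have := eq8. have := eq15. have := eq21. 
generalize Fv => F *; lra.
Qed.
Lemma F126 : Fv 1 2 6 = 0.
Proof.
have := eq0. have := eq9. have := eq14. have := eq22. 
generalize Fv => F *; lra.
Qed.
Lemma F134 : Fv 1 3 4 = 0.
Proof.
have := eq5. have := eq11. have := eq18. have := eq25. 
generalize Fv => F *; lra.
Qed.
Lemma F135 : Fv 1 3 5 = 0.
Proof.
have := eq28. have := eq29. have := eq30. have := eq31. have := eq32. have := eq33. have := eq34. 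
generalize Fv => F *; lra.
Qed.
Lemma F136 : Fv 1 3 6 = 0.
Proof.
have := eq10. have := eq16. have := eq20. have := eq27. 
generalize Fv => F *; lra.
Qed.
Lemma F145 : Fv 1 4 5 = 0.
Proof.
have := eq10. have := eq16. have := eq20. have := eq27. 
generalize Fv => F *; lra.
Qed.
Lemma F146 : Fv 1 4 6 = 0.
Proof.
have := eq28. have := eq29. have := eq30. have := eq31. have := eq32. have := eq33. have := eq34. 
generalize Fv => F *; lra.
Qed.
Lemma F156 : Fv 1 5 6 = 0.
Proof.
have := eq5. have := eq11. have := eq18. have := eq25. 
generalize Fv => F *; lra.
Qed.
Lemma F234 : Fv 2 3 4 = 0.
Proof.
have := eq4. have := eq17. have := eq19. have := eq24. 
generalize Fv => F *; lra.
Qed.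
Lemma F235 : Fv 2 3 5 = 0.
Proof.
have := eq10. have := eq16. have := eq20. have := eq27. 
generalize Fv => F *; lra.
Qed.
Lemma F236 : Fv 2 3 6 = 0.
Proof.
have := eq28. have := eq29. have := eq30. have := eq31. have := eq32. have := eq33. have := eq34. 
generalize Fv => F *; lra.
Qed.
Lemma F245 : Fv 2 4 5 = 0.
Proof.
have := eq28. have := eq29. have := eq30. have := eq31. have := eq32. have := eq33. have := eq34. 
generalize Fv => F *; lra.
Qed.
Lemma F246 : Fv 2 4 6 = 0.
Proof.
have := eq10. have := eq16. have := eq20. have := eq27. 
generalize Fv => F *; lra.
Qed.
Lemma F256 : Fv 2 5 6 = 0.
Proof.
have := eq4. have := eq17. have := eq19. have := eq24. 
generalize Fv => F *; lra.
Qed.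
Lemma F345 : Fv 3 4 5 = 0.
Proof.
have := eq1. have := eq8. have := eq15. have := eq21. 
generalize Fv => F *; lra.
Qed.
Lemma F346 : Fv 3 4 6 = 0.
Proof.
have := eq0. have := eq9. have := eq14. have := eq22. 
generalize Fv => F *; lra.
Qed.
Lemma F356 : Fv 3 5 6 = 0.
Proof.
have := eq3. have := eq6. have := eq13. have := eq23. 
generalize Fv => F *; lra.
Qed.
Lemma F456 : Fv 4 5 6 = 0.
Proof.
have := eq2. have := eq7. have := eq12. have := eq26. 
generalize Fv => F *; lra.
Qed.

Lemma Fsorted i j k : (i < j)%N -> (j < k)%N -> (k < 7)%N -> Fv i j k = 0.
Proof.
case: k => [|[|[|[|[|[|[|k]]]]]]]; case: j => [|[|[|[|[|[|[|j]]]]]]]; case: i => [|[|[|[|[|[|[|i]]]]]]] //.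
all: move=> _ _ _; first [exact F012 | exact F013 | exact F014 | exact F015 | exact F016 | exact F023 | exact F024 | exact F025 | exact F026 | exact F034 | exact F035 | exact F036 | exact F045 | exact F046 | exact F056 | exact F123 | exact F124 | exact F125 | exact F126 | exact F134 | exact F135 | exact F136 | exact F145 | exact F146 | exact F156 | exact F234 | exact F235 | exact F236 | exact F245 | exact F246 | exact F256 | exact F345 | exact F346 | exact F356 | exact F456].
Qed.

Lemma Fhalf i j k : (i < j)%N -> (j < 7)%N -> (k < 7)%N -> Fv i j k = 0.
Proof.
move=> hij hj hk; have hi : (i < 7)%N by lia.
case: (ltngtP j k) => [hjk|hkj|<-]; first exact: Fsorted.
- case: (ltngtP i k) => [hik|hki|<-].
  + by rewrite (@Fv_ikj i j k) // (@Fsorted i k j) // oppr0.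
  + by rewrite (@Fv_cyc2 i j k) // (@Fsorted k i j).
  + by rewrite Fv_iji.
- by rewrite Fv_ijj.
Qed.

Lemma Fall i j k : (i < 7)%N -> (j < 7)%N -> (k < 7)%N -> Fv i j k = 0.
Proof.
move=> hi hj hk; case: (ltngtP i j) => [hij|hji|<-].
- exact: Fhalf.
- by rewrite Fv_ji (@Fhalf j i k) // oppr0.
- by rewrite Fv_iik.
Qed.

Lemma bzero_ord (i j : 'I_7) : b (delta_mx 0 i) (delta_mx 0 j) = 0.
Proof.
apply/rowP => k.
have := BFv i j k; rewrite (@Fall i j k) // mulr0 /e !inord_val => ->.
by rewrite mxE.
Qed.

Lemma brsuml v (F : 'I_7 -> vec R) : br c (\sum_i F i) v = \sum_i br c (F i) v.
Proof. exact: (big_morph (fun u => br c u v) (fun u1 u2 => brDl u1 u2 v) (br0l v)). Qed.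
Lemma brsumr v (F : 'I_7 -> vec R) : br c v (\sum_i F i) = \sum_i br c v (F i).
Proof. exact: (big_morph (fun u => br c v u) (fun u1 u2 => brDr u1 u2 v) (br0r v)). Qed.

Lemma b_zero x y : b x y = 0.
Proof.
rewrite /b (row_sum_delta x) mulmx_suml brsuml mulmx_suml big1 // => i _.
rewrite -scalemxAl brZl -scalemxAl (row_sum_delta y) mulmx_suml brsumr mulmx_suml.
rewrite big1 ?scaler0 // => j _.
rewrite -scalemxAl brZr -scalemxAl.
by have := bzero_ord i j; rewrite /b => ->; rewrite scaler0.
Qed.

Lemma br_zero u v : br c u v = 0.
Proof.
by rewrite -(mulmxKV HP u) -(mulmxKV HP v) brP b_zero mul0mx.
Qed.
End Pf.


Theorem lemma3p8 (R : realType) (c : 'I_7 -> 'I_7 -> 'I_7 -> R) (S : 'M[R]_7) :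
  is_lie_algebra c -> two_step_nilpotent c ->
  scalar_product S -> index_three S -> invariant_form c S ->
  ~ (exists T : 'I_7 -> 'I_7 -> 'I_7 -> R, G22_compatible T S /\ ad_invariant c T).
Proof.
move=> [Hxx _] [_ [x [y Hxy]]] [HS _] _ Hinv [T [[_ [P [l [HP [Hl [HT HPS]]]]]] Had]].
by move: Hxy; rewrite (br_zero Hxx HS Hinv HP Hl HT HPS Had) eqxx.
Qed.
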